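(* Let $m=2$ attributes, each taking values in $\{1,\dots,d\}$, with $p(\cdot\mid z)$ an additive energy distribution for all $z\in\{1,\dots,d\}^2$. Suppose $\mathcal{Z}^{\mathsf{train}}$ (the support of the training prior) consists of $s$ attribute vectors drawn uniformly at random from $\{1,\dots,d\}^2$, and let $q(x,z)=q(z)q(x\mid z)$ be a test distribution with $q(x\mid z)=p(x\mid z)$ for all $z\in\{1,\dots,d\}^2$ and attribute support $\mathcal{Z}^{\mathsf{test}}\subseteq\{1,\dots,d\}^2$. Let $c>0$. If $s\ge 8cd\log d$ with $d$ sufficiently large, the additive energy classifier satisfies $\hat p(z\mid x)=p(z\mid x)$ for all $z\in\mathcal{Z}^{\mathsf{train}}$ and $x\in\mathbb{R}^n$, and $\hat q(z)=q(z)$ for all $z\in\mathcal{Z}^{\mathsf{test}}$, then with probability greater than $1-\frac1c$ the CRM predictor satisfies $\hat q(z\mid x)=q(z\mid x)$ for all $z\in\mathcal{Z}^{\mathsf{test}}$ and $x\in\mathbb{R}^n$.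
   Context: $\sigma(z)\in\{0,1\}^{2d}$ is the concatenation of one-hot encodings of $z_1,z_2$. An additive energy distribution family is $p(x\mid z)=\frac{1}{\mathbb{Z}(z)}\exp(-\langle\sigma(z),E(x)\rangle)$ with $E:\mathbb{R}^n\to\mathbb{R}^{2d}$, $\mathbb{Z}(z)=\int\exp(-\langle\sigma(z),E(x)\rangle)dx<\infty$, support $\mathbb{R}^n$. Given $\hat E:\mathbb{R}^n\to\mathbb{R}^{2d}$, $\hat B:\mathcal{Z}^{\mathsf{train}}\to\mathbb{R}$, the additive energy classifier is $\hat p(z\mid x)\propto\exp(-\langle\sigma(z),\hat E(x)\rangle+\log p(z)-\hat B(z))$, normalized over $z\in\mathcal{Z}^{\mathsf{train}}$. The extrapolated bias is $B^\star(z)=\log\mathbb{E}_{x\sim p(x)}\big[\exp(-\langle\sigma(z),\hat E(x)\rangle)/\sum_{\tilde z\in\mathcal{Z}^{\mathsf{train}}}\exp(-\langle\sigma(\tilde z),\hat E(x)\rangle+\log p(\tilde z)-\hat B(\tilde z))\big]$, with $p(x)$ the training marginal. Given a distribution $\hat q$ on attributes, the CRM predictor is $\hat q(z\mid x)\propto\exp(-\langle\sigma(z),\hat E(x)\rangle+\log\hat q(z)-B^\star(z))$, normalized over the support of $\hat q$. *)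

(* Defs.v *)
From HB Require Import structures.
From mathcomp Require Import all_boot all_order all_algebra.
From mathcomp Require Import all_classical all_reals all_analysis.
Set Implicit Arguments. Unset Strict Implicit. Unset Printing Implicit Defensive.
Import Order.TTheory GRing.Theory Num.Theory.
Local Open Scope classical_set_scope.
Local Open Scope ring_scope.

Notation attr d := ('I_d * 'I_d)%type.

Section AdditiveEnergy.
Variable R : realType.

(* sigma(z) in {0,1}^(2d): concatenation of the one-hot encodings of z1, z2. *)
Definition onehot2 (d : nat) (z : attr d) (i : 'I_(d + d)) : R :=
  ((i == lshift d z.1) || (i == rshift d z.2))%:R.

Variables (dT : measure_display) (T : measurableType dT).

Definition energy (d : nat) (E : T -> 'I_(d + d) -> R) (x : T) (z : attr d) : R :=
  \sum_(i < d + d) onehot2 z i * E x i.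

Variable mu : {measure set T -> \bar R}.

Definition partitionZ (d : nat) (E : T -> 'I_(d + d) -> R) (z : attr d) : \bar R :=
  (\int[mu]_x (expR (- energy E x z))%:E)%E.

Definition additive_energy_family (d : nat) (E : T -> 'I_(d + d) -> R) : Prop :=
  (forall i, measurable_fun setT (fun x => E x i)) /\
  (forall z : attr d, (partitionZ E z < +oo)%E).

Definition pcond (d : nat) (E : T -> 'I_(d + d) -> R) (z : attr d) (x : T) : R :=
  expR (- energy E x z) / fine (partitionZ E z).

Definition is_attr_distr (d : nat) (pz : attr d -> R) : Prop :=
  (forall z, 0 <= pz z) /\ \sum_(z : attr d) pz z = 1.

Definition attr_support (d : nat) (pz : attr d -> R) : {set attr d} :=
  [set z | 0 < pz z].

Definition marginal (d : nat) (E : T -> 'I_(d + d) -> R) (pz : attr d -> R) (x : T) : R :=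
  \sum_(z : attr d) pz z * pcond E z x.

Definition posterior (d : nat) (E : T -> 'I_(d + d) -> R) (pz : attr d -> R)
  (z : attr d) (x : T) : R :=
  pz z * pcond E z x / marginal E pz x.

Definition aec_logit (d : nat) (Eh : T -> 'I_(d + d) -> R) (pz : attr d -> R)
  (Bh : attr d -> R) (x : T) (z : attr d) : R :=
  - energy Eh x z + ln (pz z) - Bh z.

Definition aec (d : nat) (Ztr : {set attr d}) (Eh : T -> 'I_(d + d) -> R)
  (pz : attr d -> R) (Bh : attr d -> R) (z : attr d) (x : T) : R :=
  expR (aec_logit Eh pz Bh x z) / \sum_(z' in Ztr) expR (aec_logit Eh pz Bh x z').

Definition extrap_bias (d : nat) (E : T -> 'I_(d + d) -> R) (pz : attr d -> R)
  (Ztr : {set attr d}) (Eh : T -> 'I_(d + d) -> R) (Bh : attr d -> R) (z : attr d) : R :=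
  ln (fine (\int[mu]_x
    (marginal E pz x * (expR (- energy Eh x z) /
        \sum_(z' in Ztr) expR (aec_logit Eh pz Bh x z')))%:E)%E).

Definition crm_logit (d : nat) (E : T -> 'I_(d + d) -> R) (pz : attr d -> R)
  (Ztr : {set attr d}) (Eh : T -> 'I_(d + d) -> R) (Bh : attr d -> R)
  (qh : attr d -> R) (x : T) (z : attr d) : R :=
  - energy Eh x z + ln (qh z) - extrap_bias E pz Ztr Eh Bh z.

Definition crm (d : nat) (E : T -> 'I_(d + d) -> R) (pz : attr d -> R)
  (Ztr : {set attr d}) (Eh : T -> 'I_(d + d) -> R) (Bh : attr d -> R)
  (qh : attr d -> R) (z : attr d) (x : T) : R :=
  expR (crm_logit E pz Ztr Eh Bh qh x z) /
  \sum_(z' in attr_support qh) expR (crm_logit E pz Ztr Eh Bh qh x z').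

End AdditiveEnergy.

(* Probability, under s i.i.d. uniform draws from {1..d}^2, of an event on
   the drawn s-tuple. *)
Definition prob_draws (R : realType) (d s : nat) (P : s.-tuple (attr d) -> Prop) : R :=
  (\sum_(t : s.-tuple (attr d)) (`[< P t >])%:R) / ((d * d) ^ s)%:R.

Definition drawn_set (d s : nat) (t : s.-tuple (attr d)) : {set attr d} :=
  [set z in t].

(* Main.v *)
Require Import Defs.
From HB Require Import structures.
From mathcomp Require Import all_boot all_order all_algebra.
From mathcomp Require Import all_classical all_reals all_analysis.
From mathcomp Require Import measurable_realfun lebesgue_measure.
From mathcomp Require Import zify ring lra.
From Stdlib Require Import Lia.
Import Order.TTheory GRing.Theory Num.Theory.
Local Open Scope classical_set_scope.
Local Open Scope ring_scope.

Section A.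
Variable R : realType.
Variables (dT : measure_display) (T : measurableType dT).

Lemma energyE d (E : T -> 'I_(d + d) -> R) x (z : attr d) :
  energy E x z = E x (lshift d z.1) + E x (rshift d z.2).
Proof.
rewrite /energy big_split_ord /=.
congr (_ + _).
- rewrite (bigD1 z.1) //= big1 ?addr0.
    by rewrite /onehot2 eqxx /= mul1r.
  move=> i /negbTE iz; rewrite /onehot2.
  have -> : (lshift d i == lshift d z.1) = false.
    by apply/negbTE; apply: contraFN iz => /eqP/lshift_inj ->.
  have -> : (lshift d i == rshift d z.2) = false.
    by apply/negbTE/eqP => /(congr1 val) /=; move: (ltn_ord i); lia.
  by rewrite /= mul0r.
- rewrite (bigD1 z.2) //= big1 ?addr0.
    by rewrite /onehot2 eqxx orbT /= mul1r.
  move=> i /negbTE iz; rewrite /onehot2.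
  have -> : (rshift d i == rshift d z.2) = false.
    by apply/negbTE; apply: contraFN iz => /eqP/rshift_inj ->.
  have -> : (rshift d i == lshift d z.1) = false.
    by apply/negbTE/eqP => /(congr1 val) /=; move: (ltn_ord z.1); lia.
  by rewrite /= mul0r.
Qed.
End A.
Section B.
Variable R : realType.
Variables (dT : measure_display) (T : measurableType dT).
Variable mu : {measure set T -> \bar R}.

Lemma meas_expE d (E : T -> 'I_(d + d) -> R) z :
  (forall i, measurable_fun setT (fun x => E x i)) ->
  measurable_fun setT (EFin \o (fun x => expR (- energy E x z))).
Proof.
move=> mE; apply/measurable_EFinP.
apply: measurableT_comp => //.
apply: measurableT_comp => //.
rewrite (_ : (fun x => energy E x z) = (fun x => E x (lshift d z.1) + E x (rshift d z.2))).
  exact: measurable_funD.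
by apply/funext => x; rewrite energyE.
Qed.

Lemma Zpos d (E : T -> 'I_(d + d) -> R) z :
  (0 < mu setT)%E -> additive_energy_family mu E -> 0 < fine (partitionZ mu E z).
Proof.
move=> mu0 [mE Zfin].
have I0 : (0 <= partitionZ mu E z)%E.
  by apply: integral_ge0 => x _; rewrite lee_fin expR_ge0.
have := Zfin z; move: I0.
case Ez : (partitionZ mu E z) => [r| |] //= r0 _.
rewrite lt_neqAle -lee_fin r0 andbT eq_sym; apply/eqP => r00.
move: Ez; rewrite r00 /partitionZ => Ez.
have : (\int[mu]_x `|(expR (- energy E x z))%:E| = 0)%E.
  apply: (etrans _ Ez); apply: eq_integral => x _; rewrite gee0_abs // lee_fin expR_ge0.
move/(ae_eq_integral_abs mu measurableT (@meas_expE _ _ z mE)).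
case=> N [mN N0 sub].
have : setT `<=` N.
  move=> x _; apply: sub => /= H; move: (H I) => /=.
  by move/eqP; rewrite eqe gt_eqF // expR_gt0.
move=> /(le_measure mu); rewrite !inE => /(_ measurableT mN).
move=> H; have H0 : (mu setT <= 0)%E by rewrite -N0.
by move: mu0; rewrite lt_neqAle eq_le H0 measure_ge0.
Qed.
End B.
Definition good d s (t : s.-tuple (attr d)) : Prop :=
  forall f : {ffun 'I_d + 'I_d -> bool}, (exists v, f v) -> (exists v, ~~ f v) ->
    exists2 z, z \in drawn_set t & f (inl z.1) != f (inr z.2).
Arguments good {d s}.

Lemma good_ext (R : realType) d s (t : s.-tuple (attr d)) (a b : 'I_d -> R) g :
  good t -> (forall z, z \in drawn_set t -> a z.1 + b z.2 = g) ->
  forall i j, a i + b j = g.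
Proof.
move=> gt hab i j; apply/eqP/negPn/negP => hne.
pose phi v := match v with inl i => a i | inr j => g - b j end.
pose f := [ffun v => phi v == a i].
have h1 : exists v, f v by exists (inl i); rewrite ffunE /= eqxx.
have h2 : exists v, ~~ f v.
  exists (inr j); rewrite ffunE /=; apply: (contraNN _ hne) => /eqP h.
  by rewrite -h subrK.
have [z zin] := gt f h1 h2.
by rewrite !ffunE /= -(hab z zin) addrK eqxx.
Qed.

Lemma qh_eq (R : realType) d (qz qh : attr d -> R) : is_attr_distr qz -> is_attr_distr qh ->
  (forall z, z \in attr_support qz -> qh z = qz z) -> qh = qz.
Proof.
move=> [q0 q1] [h0 h1] hq.
have le z : qz z <= qh z.
  case: (boolP (0 < qz z)) => hz.
    by rewrite hq ?inE.
  have -> : qz z = 0 by apply/eqP; rewrite eq_le q0 andbT leNgt.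
  exact: h0.
have S0 : \sum_(z : attr d) (qh z - qz z) = 0.
  by rewrite sumrB h1 q1 subrr.
apply/funext => z; apply/eqP; rewrite -subr_eq0; apply/eqP.
apply: (psumr_eq0P (P := predT) _ S0) => // i _.
by rewrite subr_ge0.
Qed.

Lemma sum_ge_term (R : realType) (I : finType) (P : pred I) (F : I -> R) i0 :
  P i0 -> (forall i, P i -> 0 <= F i) -> F i0 <= \sum_(i | P i) F i.
Proof.
move=> Pi0 F0; rewrite (bigD1 i0) //=; apply: ler_wpDr => //.
by apply: sumr_ge0 => i /andP[Pi _]; exact: F0.
Qed.

Section C.
Variable R : realType.
Variables (dT : measure_display) (T : measurableType dT).
Variable mu : {measure set T -> \bar R}.
Variables (d s : nat) (t : s.-tuple (attr d)) (E Eh : T -> 'I_(d+d) -> R)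
  (pz Bh : attr d -> R).
Hypotheses (mu0 : (0 < mu setT)%E) (hE : additive_energy_family mu E) (gt : good t)
  (hpz : is_attr_distr pz) (spz : attr_support pz = drawn_set t)
  (haec : forall z x, z \in drawn_set t -> aec (drawn_set t) Eh pz Bh z x = posterior mu E pz z x).

Local Notation Ztr := (drawn_set t).
Let Zf z := fine (partitionZ mu E z).
Let Sx x := \sum_(z' in Ztr) expR (aec_logit Eh pz Bh x z').
Let Mx x := marginal mu E pz x.
Let Rx x := Sx x / Mx x.
Let D x z := energy E x z - energy Eh x z.

Let Zf_gt0 z : 0 < Zf z. Proof. exact: Zpos. Qed.
Let pz_supp z : z \in Ztr -> 0 < pz z. Proof. by rewrite -spz inE. Qed.
Let ex_z0 : exists z0, z0 \in Ztr.
Proof.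
case: (boolP [exists z, 0 < pz z]) => [/existsP[z0 hz]|/existsPn H].
  by exists z0; rewrite -spz inE.
case: hpz => p0 p1; exfalso; move: p1; rewrite big1 => [/eqP|z _].
  by rewrite eq_sym oner_eq0.
by apply/eqP; rewrite eq_le p0 andbT leNgt H.
Qed.
Let pcond_gt0 z x : 0 < pcond mu E z x.
Proof. by rewrite /pcond divr_gt0 ?expR_gt0 ?Zf_gt0. Qed.
Let Mx_gt0 x : 0 < Mx x.
Proof.
case: ex_z0 => z0 z0in; apply: (lt_le_trans _ (@sum_ge_term _ _ predT _ z0 _ _)) => //;
  by [rewrite mulr_gt0 ?pz_supp | move=> z _; rewrite mulr_ge0 ?(hpz.1) ?ltW].
Qed.
Let Sx_gt0 x : 0 < Sx x.
Proof.
case: ex_z0 => z0 z0in; apply: (lt_le_trans _ (@sum_ge_term _ _ (mem Ztr) _ z0 _ _)) => //;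
  by [rewrite expR_gt0 | move=> z _; rewrite expR_ge0].
Qed.
Let Rx_gt0 x : 0 < Rx x.
Proof. by rewrite divr_gt0. Qed.

Let key z x : z \in Ztr -> expR (D x z) = Rx x * (expR (Bh z) / Zf z).
Proof.
move=> zin; have := haec z x zin.
rewrite /aec /posterior /pcond /aec_logit -/(Sx x) -/(Mx x).
rewrite /D !expRD lnK ?posrE ?pz_supp // !expRN => H.
set a := (expR (energy Eh x z))^-1.
have hS := Sx_gt0 x; have hM := Mx_gt0 x; have hZ := Zf_gt0 z; have hp := pz_supp z zin.
have hB := expR_gt0 (Bh z).
have ha : a = (a * pz z / (expR (Bh z)) / Sx x) * (Sx x * expR (Bh z) / pz z).
  by field; rewrite ?gt_eqF.
rewrite ha H /Rx -/(Zf z); field.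
by rewrite !gt_eqF ?expR_gt0.
Qed.

Let keyln z x : z \in Ztr -> D x z = ln (Rx x) + ln (expR (Bh z) / Zf z).
Proof. by move=> zin; rewrite -lnM ?posrE ?divr_gt0 ?expR_gt0 // -key // expRK. Qed.

Let ext z x x' : D x z - ln (Rx x) = D x' z - ln (Rx x').
Proof.
pose a i := (E x (lshift d i) - Eh x (lshift d i)) - (E x' (lshift d i) - Eh x' (lshift d i)).
pose b j := (E x (rshift d j) - Eh x (rshift d j)) - (E x' (rshift d j) - Eh x' (rshift d j)).
have H : forall w, w \in Ztr -> a w.1 + b w.2 = ln (Rx x) - ln (Rx x').
  move=> w win; have h1 := keyln w x win; have h2 := keyln w x' win.
  by move: h1 h2; rewrite /a /b /D !energyE => h1 h2; lra.
have := @good_ext R d s t a b (ln (Rx x) - ln (Rx x')) gt H z.1 z.2.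
by rewrite /a /b /D !energyE => h; lra.
Qed.

Let finZ z : partitionZ mu E z \is a fin_num.
Proof.
rewrite ge0_fin_numE ?hE.2 //; apply: integral_ge0 => y _.
by rewrite lee_fin expR_ge0.
Qed.

Let Bstar z' x : extrap_bias mu E pz Ztr Eh Bh z' = (D x z' - ln (Rx x)) + ln (Zf z').
Proof.
set k := D x z' - ln (Rx x).
have -> : extrap_bias mu E pz Ztr Eh Bh z' = ln (fine ((expR k)%:E * partitionZ mu E z'))%E.
  rewrite /extrap_bias; congr (ln (fine _)).
  rewrite /partitionZ -(ge0_integralZl_EFin _ measurableT); first last.
  - exact: expR_ge0.
  - exact: (@meas_expE _ _ _ _ _ z' hE.1).
  - by move=> y _; rewrite lee_fin expR_ge0.
  apply: eq_integral => y _; congr (_%:E).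
  have hy := ext z' y x.
  have -> : - energy Eh y z' = - energy E y z' + ln (Rx y) + k by move: hy; rewrite /k /D; lra.
  rewrite !expRD lnK ?posrE // -/(Sx y) -/(Mx y) /Rx.
  have := Sx_gt0 y; have := Mx_gt0 y => hM hS.
  by field; rewrite !gt_eqF.
by rewrite -(fineK (finZ z')) -EFinM /= -/(Zf z') lnM ?posrE ?expR_gt0 ?Zf_gt0 // expRK.
Qed.

Let crm_exp (qz : attr d -> R) x z' : 0 < qz z' ->
  expR (crm_logit mu E pz Ztr Eh Bh qz x z') = Rx x * (qz z' * pcond mu E z' x).
Proof.
move=> hq; rewrite /crm_logit (Bstar z' x).
have -> : - energy Eh x z' + ln (qz z') - (D x z' - ln (Rx x) + ln (Zf z')) =
   - energy E x z' + ln (Rx x) + ln (qz z') - ln (Zf z') by rewrite /D; lra.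
rewrite !expRD !expRN !lnK ?posrE ?Zf_gt0 // /pcond -/(Zf z') expRN.
have := Zf_gt0 z' => hZ.
by field; rewrite gt_eqF // gt_eqF ?expR_gt0.
Qed.

Lemma crm_post qz z x : is_attr_distr qz -> z \in attr_support qz ->
  crm mu E pz Ztr Eh Bh qz z x = posterior mu E qz z x.
Proof.
move=> [q0 q1] zin; have hqz : 0 < qz z by rewrite inE in zin.
rewrite /crm [X in X / _](crm_exp qz x z hqz).
rewrite (eq_bigr (fun z' => Rx x * (qz z' * pcond mu E z' x))); last first.
  by move=> w; rewrite inE => hw; rewrite (crm_exp qz x w hw).
rewrite -mulr_sumr.
have -> : \sum_(w in attr_support qz) qz w * pcond mu E w x = marginal mu E qz x.
  rewrite /marginal big_mkcond /=; apply: eq_bigr => w _; rewrite inE; case: ifPn => // hw.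
  have -> : qz w = 0 by apply/eqP; rewrite eq_le q0 andbT leNgt.
  by rewrite mul0r.
have hM : 0 < marginal mu E qz x.
  apply: (lt_le_trans _ (@sum_ge_term _ _ predT _ z _ _)) => //;
  by [rewrite mulr_gt0 ?pcond_gt0 | move=> w _; rewrite mulr_ge0 ?q0 ?ltW ?pcond_gt0].
have := Rx_gt0 x => hR.
by rewrite /posterior; field; rewrite !gt_eqF.
Qed.
End C.
Section Comb.
Variable R : realType.

Lemma card_sum_nat (T : finType) (P : pred T) : #|P| = (\sum_(t : T) (P t : nat))%N.
Proof.
rewrite -sum1_card big_mkcond /=; apply: eq_bigr => t _.
by rewrite unfold_in; case: (P t).
Qed.

Lemma count_all (T : finType) (A : pred T) s :
  \sum_(t : s.-tuple T) ((all A t : bool)%:R : R) = (#|A| ^ s)%:R.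
Proof.
have -> : \sum_(t : s.-tuple T) ((all A t : bool)%:R : R) = (\sum_(t : s.-tuple T | all A t) 1%N)%:R.
  rewrite natr_sum [RHS]big_mkcond /=; apply: eq_bigr => t _; by case: (all A t).
congr (_%:R).
rewrite (reindex (@tuple_of_finfun T s)); last first.
  by apply: onW_bij; exists (@finfun_of_tuple T s);
    [exact: tuple_of_finfunK | exact: finfun_of_tupleK].
rewrite (eq_bigl (fun f : {ffun 'I_s -> T} => f \in ffun_on A)); last first.
  move=> f /=; apply/allP/ffun_onP => H.
    by move=> i; apply: H; exact: (map_f f (mem_enum _ i)).
  by move=> x /mapP[i _ ->]; exact: H.
by rewrite sum1_card card_ffun_on card_ord.
Qed.

Definition ind (P : Prop) : R := (`[< P >] : bool)%:R.

Lemma ind_ge0 P : 0 <= ind P. Proof. by rewrite /ind ler0n. Qed.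

Lemma prob_mono d s (G P : s.-tuple (attr d) -> Prop) :
  (forall t, G t -> P t) -> prob_draws R G <= prob_draws R P.
Proof.
move=> GP; rewrite /prob_draws ler_wpM2r ?invr_ge0 ?ler0n //.
apply: ler_sum => t _; case: (asboolP (G t)) => [/GP/asboolP -> //|_].
by rewrite ler0n.
Qed.

End Comb.
Definition kf d (f : {ffun 'I_d + 'I_d -> bool}) := #|[pred v | f v]|.
Arguments kf {d}.
Definition small d (f : {ffun 'I_d + 'I_d -> bool}) := (0 < kf f)%N && (kf f <= d)%N.
Definition nc d (f : {ffun 'I_d + 'I_d -> bool}) (z : attr d) := f (inl z.1) == f (inr z.2).
Arguments small {d}. Arguments nc {d}.

Lemma step1 (R : realType) d s (t : s.-tuple (attr d)) :
  1 - \sum_(f : {ffun 'I_d + 'I_d -> bool}) ((small f)%:R * (all (nc f) t)%:R)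
    <= ind R (good t).
Proof.
have H0 : 0 <= \sum_(f : {ffun 'I_d + 'I_d -> bool}) ((small f)%:R * (all (nc f) t)%:R : R).
  by apply: sumr_ge0 => f _; rewrite mulr_ge0 ?ler0n.
rewrite /ind; case: asboolP => [_|ng] /=; first by lra.
have [f [hf1 hf2 hf3]] : exists f : {ffun 'I_d + 'I_d -> bool},
    [/\ (exists v, f v), (exists v, ~~ f v) & all (nc f) t].
  apply: contrapT => H; apply: ng => f h1 h2; apply: contrapT => H2; apply: H.
  exists f; split => //.
  apply/allP => z zin; apply/negPn/negP => hz; apply: H2; exists z => //.
  by rewrite inE.
have [f' [s' a']] : exists f', small f' /\ all (nc f') t.
  case: (leqP (kf f) d) => hk.
    exists f; split => //; rewrite /small hk andbT; apply/card_gt0P.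
    by case: hf1 => v hv; exists v.
  exists [ffun v => ~~ f v]; split.
    have hc := cardC [pred v | f v]; rewrite card_sum !card_ord in hc.
    rewrite /small /kf.
    have -> : #|[pred v | [ffun v => ~~ f v] v]| = #|[predC [pred v | f v]]|.
      by apply: eq_card => v; rewrite !inE ffunE.
    have hpos : (0 < #|[predC [pred v | f v]]|)%N.
      by apply/card_gt0P; case: hf2 => v hv; exists v; rewrite !inE.
    rewrite /kf in hk.
    have hc' : (#|[pred v | f v]| + #|[predC [pred v | f v]]| = d + d)%N := hc.
    have hk' : (d < #|[pred v | f v]|)%N := hk.
    apply/andP; split => //; move: hc' hk'.
    set A := #|[pred v | f v]|; set B := #|[predC [pred v | f v]]|; lia.
  apply/allP => z zin; move/allP: hf3 => /(_ z zin); rewrite /nc !ffunE.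
  by case: (f _); case: (f _).
have := @sum_ge_term R _ predT (fun f => ((small f)%:R * (all (nc f) t)%:R : R)) f' isT.
rewrite s' a' /= mulr1 => H; have := H (fun f _ => mulr_ge0 (ler0n _ _) (ler0n _ _)).
by lra.
Qed.
Section Bounds.
Variable R : realType.

Lemma kf_split d (f : {ffun 'I_d + 'I_d -> bool}) :
  kf f = (#|[pred i | f (inl i)]| + #|[pred j | f (inr j)]|)%N.
Proof. by rewrite /kf !card_sum_nat big_sumType. Qed.

Lemma card_nc d (f : {ffun 'I_d + 'I_d -> bool}) :
  (#|[pred z : attr d | nc f z]|%:R : R) =
  #|[pred i | f (inl i)]|%:R * #|[pred j | f (inr j)]|%:R +
  (d%:R - #|[pred i | f (inl i)]|%:R) * (d%:R - #|[pred j | f (inr j)]|%:R).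
Proof.
set p := fun i : 'I_d => (((f (inl i)) : nat)%:R : R).
set q := fun j : 'I_d => (((f (inr j)) : nat)%:R : R).
have Ea : (#|[pred i | f (inl i)]|%:R : R) = \sum_i p i by rewrite card_sum_nat natr_sum.
have Eb : (#|[pred j | f (inr j)]|%:R : R) = \sum_j q j by rewrite card_sum_nat natr_sum.
have Em : (#|[pred z : attr d | nc f z]|%:R : R) =
    \sum_i \sum_j (p i * q j + (1 - p i) * (1 - q j)).
  rewrite card_sum_nat natr_sum.
  rewrite -(pair_bigA _ (fun i j => (((nc f (i, j)) : nat)%:R : R))) /=.
  apply: eq_bigr => i _; apply: eq_bigr => j _; rewrite /nc /p /q /=.
  by case: (f (inl i)); case: (f (inr j)) => /=; lra.
have E1 : forall r : 'I_d -> R, \sum_i (1 - r i) = d%:R - \sum_i r i.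
  by move=> r; rewrite sumrB sumr_const card_ord.
rewrite Em Ea Eb.
transitivity (\sum_i (p i * \sum_j q j + (1 - p i) * \sum_j (1 - q j))).
  by apply: eq_bigr => i _; rewrite big_split /= !mulr_sumr.
by rewrite big_split /= -!mulr_suml (E1 p) (E1 q).
Qed.

Lemma term_bound d s (f : {ffun 'I_d + 'I_d -> bool}) : (4 <= d)%N ->
  8 * d%:R * ln (d%:R : R) <= s%:R -> small f ->
  ((#|[pred z : attr d | nc f z]| ^ s)%:R : R) <=
    ((d * d) ^ s)%:R * (expR (- (4 * ln (d%:R : R)))) ^+ kf f.
Proof.
move=> hd hs /andP[k0 kd].
have hk := @kf_split d f.
set a := #|[pred i | f (inl i)]| in hk.
set b := #|[pred j | f (inr j)]| in hk.
set m := #|[pred z : attr d | nc f z]|.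
have Em : (m%:R : R) = a%:R * b%:R + (d%:R - a%:R) * (d%:R - b%:R) by exact: card_nc.
set D := (d%:R : R).
have D0 : 4 <= D by rewrite /D (ler_nat R 4 d).
have ka : ((kf f)%:R : R) = a%:R + b%:R by rewrite hk natrD.
have kdR : ((kf f)%:R : R) <= D by rewrite /D ler_nat.
have k0R : 0 <= ((kf f)%:R : R) by rewrite ler0n.
have a0 : 0 <= (a%:R : R) by rewrite ler0n.
have b0 : 0 <= (b%:R : R) by rewrite ler0n.
set k := ((kf f)%:R : R) in ka kdR k0R.
have h2 : 2 * (m%:R : R) <= 2 * (D * D) - k * D.
  have H1 : 0 <= (D - k) * k by rewrite mulr_ge0 // subr_ge0.
  have H2 : 0 <= (a%:R - b%:R) ^+ 2 :> R by rewrite sqr_ge0.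
  rewrite Em; rewrite ka in H1 *; nra.
have DD : 0 < D * D by rewrite mulr_gt0 //; lra.
have hmle : (m%:R : R) / (D * D) <= 1 - k / (2 * D).
  rewrite ler_pdivrMr //.
  have -> : (1 - k / (2 * D)) * (D * D) = D * D - k * D / 2.
    by field; lra.
  lra.
have hm0 : 0 <= (m%:R : R) / (D * D) by rewrite divr_ge0 ?ler0n // ltW.
have hl0 : 0 <= 1 - k / (2 * D).
  rewrite subr_ge0 ler_pdivrMr; lra.
have step1 : ((m%:R : R) / (D * D)) ^+ s <= (expR (- (k / (2 * D)))) ^+ s.
  apply: lerXn2r; rewrite ?nnegrE ?expR_ge0 //.
  apply: (le_trans hmle); have := expR_ge1Dx (- (k / (2 * D))); lra.
have step2 : (expR (- (k / (2 * D)))) ^+ s <= (expR (- (4 * ln D))) ^+ kf f.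
  rewrite -expRM_natl -expRM_natl ler_expR.
  have hl : 0 <= ln D by rewrite ln_ge0 //; lra.
  have hsD : 4 * ln D <= s%:R / (2 * D) by rewrite ler_pdivlMr; lra.
  have -> : s%:R * - (k / (2 * D)) = - (k * (s%:R / (2 * D))) by field; lra.
  rewrite -/k; have := ler_wpM2l k0R hsD; lra.
have := le_trans step1 step2.
rewrite expr_div_n => H.
rewrite !natrX natrM -/D.
have DDs : 0 < (D * D) ^+ s by exact: exprn_gt0.
by rewrite mulrC -ler_pdivrMr.
Qed.
End Bounds.
Section Sum.
Variable R : realType.

Lemma sum_weights d (x : R) :
  \sum_(f : {ffun 'I_d + 'I_d -> bool}) x ^+ kf f = (1 + x) ^+ (d + d).
Proof.
rewrite (eq_bigr (fun f : {ffun 'I_d + 'I_d -> bool} =>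
   \prod_(v : 'I_d + 'I_d) (fun (v : 'I_d + 'I_d) (b : bool) => if b then x else 1) v (f v))); last first.
  move=> f _ /=; rewrite -big_mkcond /= /kf -prodr_const.
  by apply: eq_bigl => v; rewrite inE.
rewrite -(bigA_distr_bigA (fun (v : 'I_d + 'I_d) (b : bool) => if b then x else 1)) /=.
rewrite (eq_bigr (fun _ => 1 + x)); last by move=> v _; rewrite big_bool addrC.
by rewrite prodr_const card_sum card_ord.
Qed.

Lemma sum_small d : (4 <= d)%N ->
  \sum_(f : {ffun 'I_d + 'I_d -> bool}) ((small f)%:R * (expR (- (4 * ln (d%:R : R)))) ^+ kf f)
    <= 4 / d%:R.
Proof.
move=> hd.
set x := expR (- (4 * ln (d%:R : R))).
set D := (d%:R : R).
have D0 : 4 <= D by rewrite /D (ler_nat R 4 d).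
have x0 : 0 <= x by rewrite expR_ge0.
pose f0 : {ffun 'I_d + 'I_d -> bool} := [ffun => false].
have kf0 : kf f0 = 0%N by rewrite /kf; apply: eq_card0 => v; rewrite inE ffunE.
have H1 : \sum_(f : {ffun 'I_d + 'I_d -> bool}) ((small f)%:R * x ^+ kf f)
     <= \sum_(f : {ffun 'I_d + 'I_d -> bool}) x ^+ kf f - 1.
  rewrite (bigD1 f0) //= [X in _ <= X - _](bigD1 f0) //= kf0 /small kf0 /= mul0r add0r expr0.
  rewrite addrC addrK; apply: ler_sum => f _.
  case: (_ && _) => /=; first by rewrite mulr1n mul1r.
  by rewrite mulr0n mul0r exprn_ge0.
rewrite sum_weights in H1; apply: (le_trans H1).
have Dn0 : D != 0 by rewrite gt_eqF //; lra.
have xE : x = (D ^+ 4)^-1.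
  by rewrite /x expRN expRM_natl lnK // posrE /D ltr0n; lia.
set y := (d + d)%:R * x.
have hy : y <= 2 / D.
  rewrite /y xE natrD -/D ler_pdivlMr; last by lra.
  have -> : (D + D) * (D ^+ 4)^-1 * D = 2 / D ^+ 2.
    by field; do ?[exact: Dn0 | exact: (expf_neq0 _ Dn0) | apply/andP; split].
  rewrite ler_pdivrMr ?exprn_gt0 //; last by lra.
  rewrite expr2; nra.
have y0 : 0 <= y by rewrite /y mulr_ge0 ?ler0n.
have hy2 : 2 / D <= 1 / 2 by rewrite ler_pdivrMr; lra.
have e1 : (1 + x) ^+ (d + d) <= expR y.
  rewrite /y expRM_natl; apply: lerXn2r; rewrite ?nnegrE ?expR_ge0 //; last first.
    exact: expR_ge1Dx.
  lra.
have e2 : expR y <= (1 - y)^-1.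
  have h := expR_ge1Dx (- y).
  rewrite -[expR y]invrK -expRN lef_pV2 ?posrE ?expR_gt0 //; lra.
have e3 : (1 - y)^-1 - 1 <= 2 * y.
  have hy1 : 0 < 1 - y by lra.
  suff : (1 - y)^-1 <= 1 + 2 * y by lra.
  rewrite -[X in X <= _]mul1r ler_pdivrMr //.
  have : 0 <= y * (1 - 2 * y) by apply: mulr_ge0; lra.
  nra.
have : 2 * y <= 4 / D.
  have -> : 4 / D = 2 * (2 / D) by field; lra.
  lra.
lra.
Qed.
End Sum.
Lemma exists_good d s : (0 < d)%N -> (d + d <= s)%N -> exists t : s.-tuple (attr d), good t.
Proof.
move=> d0 hs; pose o : 'I_d := Ordinal d0.
pose F (i : 'I_s) : attr d :=
  if (i < d)%N then (insubd o i, o) else (o, insubd o (i - d)%N).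
exists [tuple F i | i < s].
have memF : forall i : 'I_s, F i \in drawn_set [tuple F i | i < s].
  by move=> i; rewrite inE; have := mem_tnth i [tuple F j | j < s]; rewrite tnth_mktuple.
have mem1 : forall i : 'I_d, (i, o) \in drawn_set [tuple F i | i < s].
  move=> i; have hi : (i < s)%N by move: (ltn_ord i); lia.
  have -> : (i, o) = F (Ordinal hi).
    by rewrite /F /= ltn_ord; congr pair; apply: val_inj; rewrite val_insubd /= ltn_ord.
  exact: memF.
have mem2 : forall j : 'I_d, (o, j) \in drawn_set [tuple F i | i < s].
  move=> j; have hj : (d + j < s)%N by move: (ltn_ord j); lia.
  have -> : (o, j) = F (Ordinal hj).
    rewrite /F /= ifF; last by apply/negbTE; rewrite -leqNgt leq_addr.
    by congr pair; apply: val_inj; rewrite val_insubd /= addKn ltn_ord.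
  exact: memF.
move=> f [v hv] [w hw]; apply: contrapT => H.
have E z : z \in drawn_set [tuple F i | i < s] -> f (inl z.1) = f (inr z.2).
  by move=> zin; apply/eqP/negPn/negP => hz; apply: H; exists z.
have all_eq : forall u, f u = f (inl o).
  case=> [i | j].
    by rewrite (E _ (mem1 i)) -(E _ (mem1 o)).
  by rewrite -(E _ (mem2 j)).
by move: hw; rewrite all_eq -(all_eq v) hv.
Qed.

Lemma prob_pos (R : realType) d s : (0 < d)%N -> (d + d <= s)%N -> 0 < prob_draws R (@good d s).
Proof.
move=> d0 hs; have [t0 g0] := @exists_good d s d0 hs.
rewrite /prob_draws divr_gt0 //; last first.
  by rewrite ltr0n expn_gt0 muln_gt0 d0.
apply: (lt_le_trans _ (@sum_ge_term R _ predT (fun t => ind R (good t)) t0 isT _)).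
  by rewrite /ind; case: asboolP => //.
by move=> t _; exact: ind_ge0.
Qed.

Lemma prob_good (R : realType) d s : (4 <= d)%N -> 8 * d%:R * ln (d%:R : R) <= s%:R ->
  1 - 4 / d%:R <= prob_draws R (@good d s).
Proof.
move=> hd hs.
set x := expR (- (4 * ln (d%:R : R))).
set N := (((d * d) ^ s)%:R : R).
have N0 : 0 < N by rewrite ltr0n expn_gt0 muln_gt0; apply/orP; left; apply/andP; split; lia.
set SS := \sum_(f : {ffun 'I_d + 'I_d -> bool}) ((small f)%:R * x ^+ kf f).
have SS4 : SS <= 4 / d%:R by exact: sum_small.
have Hc : \sum_(t : s.-tuple (attr d))
      (1 - \sum_(f : {ffun 'I_d + 'I_d -> bool}) ((small f)%:R * (all (nc f) t)%:R) : R) =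
    N - \sum_(f : {ffun 'I_d + 'I_d -> bool}) ((small f)%:R * ((#|[pred z : attr d | nc f z]| ^ s)%:R)).
  rewrite sumrB sumr_const card_tuple card_prod card_ord; congr (_ - _).
  rewrite exchange_big /=; apply: eq_bigr => f _; rewrite -mulr_sumr; congr (_ * _).
  exact: count_all.
have Hb : \sum_(f : {ffun 'I_d + 'I_d -> bool}) ((small f)%:R * ((#|[pred z : attr d | nc f z]| ^ s)%:R))
    <= N * SS.
  rewrite /SS mulr_sumr; apply: ler_sum => f _.
  case hsf : (small f); last by rewrite !mul0r mulr0.
  by rewrite !mul1r; exact: term_bound.
have Hs : N * (1 - SS) <= \sum_(t : s.-tuple (attr d)) ind R (good t).
  apply: (le_trans _ (ler_sum _ (fun t _ => @step1 R d s t))).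
  by rewrite Hc; lra.
rewrite /prob_draws ler_pdivlMr //.
apply: (le_trans _ Hs).
have : 0 <= N by lra.
nra.
Qed.
Theorem theorem6 (R : realType) (c : R) : 0 < c ->
  exists d0 : nat, forall d s : nat, (d0 <= d)%N ->
  8 * c * d%:R * ln (d%:R : R) <= s%:R ->
  forall (dT : measure_display) (T : measurableType dT)
    (mu : {measure set T -> \bar R}),
  (0 < mu setT)%E ->
  forall E : T -> 'I_(d + d) -> R, additive_energy_family mu E ->
  forall qz qh : attr d -> R, is_attr_distr qz -> is_attr_distr qh ->
  (forall z, z \in attr_support qz -> qh z = qz z) ->
  1 - c^-1 <
  prob_draws R (fun t : s.-tuple (attr d) =>
    forall (pz : attr d -> R) (Eh : T -> 'I_(d + d) -> R) (Bh : attr d -> R),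
      is_attr_distr pz -> attr_support pz = drawn_set t ->
      (forall z x, z \in drawn_set t -> aec (drawn_set t) Eh pz Bh z x = posterior mu E pz z x) ->
      forall z x, z \in attr_support qz ->
        crm mu E pz (drawn_set t) Eh Bh qh z x = posterior mu E qz z x).
Proof.
move=> c0.
set K := 4 * c + expR c^-1.
exists ((Num.Def.trunc K).+1 + 4)%N => d s hd hs dT T mu mu0 E hE qz qh hqz hqh hq.
have d4 : (4 <= d)%N by apply: leq_trans hd; rewrite leq_addl.
have dK : K < d%:R.
  by apply: (lt_le_trans (truncnS_gt K)); rewrite ler_nat; apply: leq_trans hd; rewrite leq_addr.
have eqh := @qh_eq R d qz qh hqz hqh hq; subst qh.
have GP : forall t : s.-tuple (attr d), good t ->
    forall (pz : attr d -> R) (Eh : T -> 'I_(d + d) -> R) (Bh : attr d -> R),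
      is_attr_distr pz -> attr_support pz = drawn_set t ->
      (forall z x, z \in drawn_set t -> aec (drawn_set t) Eh pz Bh z x = posterior mu E pz z x) ->
      forall z x, z \in attr_support qz ->
        crm mu E pz (drawn_set t) Eh Bh qz z x = posterior mu E qz z x.
  move=> t gt pz Eh Bh hpz spz haec z x zin.
  by apply: crm_post.
have PM := @prob_mono R d s (@good d s) _ GP.
apply: (lt_le_trans _ PM).
have hD : 0 < (d%:R : R) by rewrite ltr0n; lia.
have eK : 0 < expR c^-1 by exact: expR_gt0.
case: (leP c 1) => hc.
- have ci : 1 <= c^-1 by rewrite -(mul1r c^-1) ler_pdivlMr // mul1r.
  have hl : c^-1 < ln (d%:R : R).
    by rewrite -ltr_expR lnK ?posrE //; rewrite /K in dK; lra.
  have h1 : c * c^-1 < c * ln (d%:R : R) by rewrite ltr_pM2l.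
  rewrite mulfV ?gt_eqF // in h1.
  have h2 : d%:R * 1 < d%:R * (c * ln (d%:R : R)) by rewrite ltr_pM2l.
  have h3 : 8 * c * d%:R * ln (d%:R : R) = 8 * (d%:R * (c * ln (d%:R : R))) by ring.
  have : ((d + d)%N%:R : R) < s%:R by rewrite natrD; lra.
  rewrite ltr_nat => /ltnW hss.
  have := @prob_pos R d s (leq_trans (isT : (0 < 4)%N) d4) hss.
  lra.
- have hl : 0 <= ln (d%:R : R) by rewrite ln_ge0 // (ler_nat R 1 d); lia.
  have hs8 : 8 * d%:R * ln (d%:R : R) <= s%:R.
    have : 0 <= (c - 1) * (d%:R * ln (d%:R : R)) by rewrite mulr_ge0 // ?mulr_ge0 //; lra.
    nra.
  have := @prob_good R d s d4 hs8.
  have : 4 / d%:R < c^-1.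
    rewrite ltr_pdivrMr // mulrC ltr_pdivlMr //; rewrite /K in dK; lra.
  lra.
Qed.
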